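(* The set of partitions whose odd parts all have multiplicity at most $1$ (Schröder partitions) is exactly the set of partitions $\lambda$ with $c_2(c_2(\lambda))=\lambda$.
   Context: For a partition $\lambda$, let $\lambda'_j=\#\{t:\lambda_t\ge j\}$ be the length of the $j$-th column of its Young shape. For a positive integer $n$, $c_n(\lambda)$ is the partition whose $i$-th part is $\sum_{j=(i-1)n+1}^{in}\lambda'_j$ (zero parts omitted), i.e. the total number of cells in columns $(i-1)n+1,\dots,in$ of $\lambda$. *)

(* Defs.v *)
From mathcomp Require Import all_boot.
Set Implicit Arguments. Unset Strict Implicit. Unset Printing Implicit Defensive.

Definition is_partition (la : seq nat) : bool :=
  sorted geq la && all (fun x => 0 < x) la.

Definition maxpart (la : seq nat) : nat := \max_(x <- la) x.

(* lambda'_j = #{t : lambda_t >= j} *)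
Definition colLen (la : seq nat) (j : nat) : nat := count (fun t => j <= t) la.

(* c_n(lambda): i-th part (i >= 1) is sum_{j=(i-1)n+1}^{in} lambda'_j,
   zero parts omitted.  Index i ranges over 1..maxpart la, which (for n >= 1)
   covers all possibly nonzero parts; mkseq index i' = i - 1. *)
Definition cn (n : nat) (la : seq nat) : seq nat :=
  filter (fun x => x != 0)
    (mkseq (fun i => \sum_((i * n).+1 <= j < (i.+1 * n).+1) colLen la j) (maxpart la)).

Definition schroeder (la : seq nat) : Prop :=
  forall k, odd k -> count_mem k la <= 1.

(* Main.v *)
Require Import Defs.
From mathcomp Require Import all_boot.
From mathcomp Require Import zify.

Lemma colLen_anti la j j' : j <= j' -> colLen la j' <= colLen la j.
Proof. move=> h; apply: sub_count => t /=; exact: leq_trans h. Qed.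

Lemma colLen_big la j : maxpart la < j -> colLen la j = 0.
Proof.
move=> h; rewrite /colLen; apply/eqP; rewrite -leqn0 leqNgt -has_count.
apply/hasPn => t Ht; rewrite -ltnNge; apply: leq_ltn_trans h.
exact: (leq_bigmax_seq (P := xpredT) (F := id) t Ht).
Qed.

Lemma geq_tr : transitive geq.
Proof. move=> a b c h1 h2; exact: leq_trans h2 h1. Qed.

Definition f la i := colLen la (i*2).+1 + colLen la (i*2).+2.

Lemma cn2E la : cn 2 la = filter (fun x => x != 0) (mkseq (f la) (maxpart la)).
Proof.
rewrite /cn; congr filter; apply: eq_mkseq => i.
have -> : (i.+1 * 2).+1 = (i*2).+3 by lia.
rewrite big_ltn; last lia.
rewrite big_ltn; last lia.
by rewrite big_geq ?addn0.
Qed.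

Lemma f_anti la : {homo f la : x y / x <= y >-> y <= x}.
Proof. move=> x y h; apply: leq_add; apply: colLen_anti; lia. Qed.

Lemma f_big la i : maxpart la <= i -> f la i = 0.
Proof. move=> h; rewrite /f !colLen_big //; lia. Qed.

Lemma nth_filter_sorted s i : sorted geq s ->
  nth 0 (filter (fun x => x != 0) s) i = nth 0 s i.
Proof.
elim: s i => [|x s IH] i //= hs.
have hs' : sorted geq s := path_sorted hs.
case: eqP => [Ex|_].
  subst x.
  have hall := order_path_min geq_tr hs.
  have -> : filter (fun x => x != 0) s = [::].
    apply/eqP; rewrite -(negbK (_ == _)) -has_filter; apply/hasPn => y Hy /=.
    by have := allP hall y Hy => /= h; lia.
  case: i => [|i] /=; rewrite ?nth_nil //.
  case: (ltnP i (size s)) => hi; last by rewrite nth_default.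
  by have := allP hall _ (mem_nth 0 hi) => /= h; lia.
by case: i => [|i] //=; rewrite IH.
Qed.

Lemma nth_cn2 la i : nth 0 (cn 2 la) i = f la i.
Proof.
rewrite cn2E nth_filter_sorted; last first.
  rewrite /mkseq; apply: homo_sorted (iota_sorted 0 _) => x y h; exact: f_anti.
case: (ltnP i (maxpart la)) => hi; first by rewrite nth_mkseq.
by rewrite nth_default ?size_mkseq // f_big.
Qed.

Lemma count_thr (g : nat -> nat) M j s :
  {homo g : x y / x <= y >-> y <= x} -> (forall i, M <= i -> g i = 0) -> 0 < j ->
  (s < count (fun i => j <= g i) (iota 0 M)) = (j <= g s).
Proof.
move=> ga gz j0; case: (leqP j (g s)) => hs.
  have sM : s < M.
    rewrite ltnNge; apply/negP => hM; move: hs; rewrite gz //; lia.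
  rewrite -(subnKC sM) iotaD count_cat.
  have /eqP -> : count (fun i => j <= g i) (iota 0 s.+1) == size (iota 0 s.+1).
    rewrite -all_count; apply/allP => i; rewrite mem_iota => /andP[_ hi].
    apply: leq_trans hs (ga _ _ _); lia.
  by rewrite size_iota; lia.
apply/negbTE; rewrite -leqNgt.
case: (leqP s M) => sM; last first.
  by apply: leq_trans (count_size _ _) _; rewrite size_iota; lia.
rewrite -(subnKC sM) iotaD count_cat.
have -> : count (fun i => j <= g i) (iota (0 + s) (M - s)) = 0.
  apply/eqP; rewrite -leqn0 leqNgt -has_count; apply/hasPn => i.
  rewrite mem_iota => /andP[hi _]; rewrite -ltnNge.
  apply: leq_ltn_trans hs; apply: ga; lia.
by rewrite addn0; apply: leq_trans (count_size _ _) _; rewrite size_iota.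
Qed.

Lemma thr_uniq c c' : (forall s, (s < c) = (s < c')) -> c = c'.
Proof. move=> h; move: (h c) (h c'); rewrite !ltnn; lia. Qed.

Lemma eq_pos_seq s1 s2 : all (fun x => 0 < x) s1 -> all (fun x => 0 < x) s2 ->
  (forall i, nth 0 s1 i = nth 0 s2 i) -> s1 = s2.
Proof.
have key : forall s i, all (fun x => 0 < x) s -> (i < size s) = (0 < nth 0 s i).
  move=> s i hs; case: ltnP => hi; first by rewrite (allP hs) // mem_nth.
  by rewrite nth_default.
move=> h1 h2 E.
have Hs : size s1 = size s2.
  have A := key s1 (size s2) h1; have B := key s2 (size s1) h2.
  have C := key s1 (size s1) h1; have D := key s2 (size s2) h2.
  have E1 := E (size s1); have E2 := E (size s2); lia.
by apply: (eq_from_nth (x0 := 0)) => // i _; rewrite E.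
Qed.

Lemma cn_pos n la : all (fun x => 0 < x) (cn n la).
Proof. by apply/allP => x; rewrite mem_filter lt0n => /andP[]. Qed.

Lemma count_mem_split la k : colLen la k = colLen la k.+1 + count_mem k la.
Proof.
rewrite /colLen; elim: la => [|x la IH] //=; rewrite IH.
by case: (ltngtP k x) => h /=; lia.
Qed.

Theorem mainTheorem3 (la : seq nat) :
  is_partition la -> (schroeder la <-> cn 2 (cn 2 la) = la).
Proof.
move=> hp; have [hsort hposl] := andP hp.
have anti : {homo nth 0 la : x y / x <= y >-> y <= x}.
  move=> x y hxy; case: (ltnP y (size la)) => hy; last by rewrite nth_default.
  have hx : x < size la by lia.
  exact: (sorted_leq_nth geq_tr (fun z => leqnn z) 0 hsort).
have thrL j i : 0 < j -> (i < colLen la j) = (j <= nth 0 la i).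
  move=> j0; rewrite /colLen -{1}(mkseq_nth 0 la) /mkseq count_map.
  apply: count_thr => // k hk; by rewrite nth_default.
set mu := cn 2 la.
have thrM j s : 0 < j -> (s < colLen mu j) = (j <= f la s).
  move=> j0; rewrite /mu cn2E /colLen count_filter /mkseq count_map.
  rewrite (@eq_count _ _ (fun i => j <= f la i)); last first.
    move=> i /=; case: (f la i) => [|x] /=; last by rewrite andbT.
    by rewrite andbF; lia.
  apply: count_thr => //; [exact: f_anti | exact: f_big].
have hE i : nth 0 (cn 2 mu) i = colLen mu (i*2).+1 + colLen mu (i*2).+2.
  exact: nth_cn2.
split.
- move=> hs; apply: eq_pos_seq => //; first exact: cn_pos.
  move=> i; rewrite hE.
  set g := nth 0 la i.
  have -> : colLen mu (i*2).+2 = g./2.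
    apply: esym; apply: thr_uniq => s; rewrite thrM // /f.
    have := thrL (s*2).+1 i isT; have := thrL (s*2).+2 i isT.
    have := count_mem_split la (s*2).+1.
    have : count_mem (s*2).+1 la <= 1 by apply: hs; rewrite /= oddM andbF.
    rewrite -/g; lia.
  have -> : colLen mu (i*2).+1 = uphalf g.
    apply: esym; apply: thr_uniq => s; rewrite thrM // /f.
    have := thrL (s*2).+1 i isT; have := thrL (s*2).+2 i isT.
    have := count_mem_split la (s*2).+1.
    have : count_mem (s*2).+1 la <= 1 by apply: hs; rewrite /= oddM andbF.
    rewrite -/g; lia.
  lia.
- move=> E k hk; rewrite leqNgt; apply/negP => hc.
  have [s ks] : exists s, k = (s*2).+1.
    exists k./2; have := odd_double_half k; rewrite hk; lia.
  subst k.
  set i := colLen la (s*2).+2.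
  have hsplit := count_mem_split la (s*2).+1.
  have gi : nth 0 la i = (s*2).+1.
    have := thrL (s*2).+1 i isT; have := thrL (s*2).+2 i isT; rewrite ltnn; lia.
  have key j : j = (i*2).+1 \/ j = (i*2).+2 -> colLen mu j = s.+1.
    move=> hj; apply: esym; apply: thr_uniq => s'; rewrite thrM; last lia.
    case: (leqP s' s) => hs'.
      have := f_anti la _ _ hs'; rewrite /f; lia.
    have := f_anti la _ _ hs'; rewrite /f.
    have : colLen la (s.+1*2).+1 <= colLen la (s*2).+2 by apply: colLen_anti; lia.
    have : colLen la (s.+1*2).+2 <= colLen la (s*2).+2 by apply: colLen_anti; lia.
    rewrite -/i; lia.
  have := hE i; rewrite E gi (key _ (or_introl erefl)) (key _ (or_intror erefl)).
  lia.
Qed.
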